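(* In the elliptically symmetric deformation model $p(\bm x,\bm\theta)=|\Lambda|g(\|\Lambda(\bm x-\bm\mu)\|)$ (with $f(\bm z)=g(\|\bm z\|)$ having mean $0$ and covariance $I$, $\Lambda$ symmetric positive definite), let $\bm x_1,\dots,\bm x_n$ ($n\ge d$) be observations such that the sample covariance $\hat\Sigma=\frac1n\sum_{t=1}^n(\bm x_t-\bar{\bm x})(\bm x_t-\bar{\bm x})^\top$, $\bar{\bm x}=\frac1n\sum_t\bm x_t$, is positive definite. Then the Wasserstein estimator $\hat{\bm\theta}_W=(\hat{\bm\mu}_W,\hat\Lambda_W)$, i.e. the solution with $\Lambda$ symmetric positive definite of the estimating equations $\frac1n\sum_{t=1}^n S^W_k(\bm x_t,\bm\theta)=0$ for all Wasserstein scores $S^W_k$ (for all $\mu_i$ and all $\Lambda_{ij}$), is $$\hat{\bm\mu}_W=\bar{\bm x},\qquad \hat\Lambda_W=\hat\Sigma^{-1/2},$$ irrespective of the waveform $g$.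
   Context: The Wasserstein score $S^W_i$ for a parameter $\theta_i$ of a family $p(\bm x,\bm\theta)$ is the solution of $\nabla_{\bm x}\cdot(p\nabla_{\bm x}S^W_i)=-\partial_{\theta_i}p$ with $\mathrm{E}_{\bm\theta}[S^W_i]=0$. For this model the scores are $S^W_{\mu_i}=x_i-\mu_i$ and, for $\Lambda_{ij}$, $S^W_{\Lambda_{ij}}=\tfrac12\bm x^\top A\bm x+\bm b^\top\bm x-\mathrm{E}_{\bm\theta}[\tfrac12\bm x^\top A\bm x+\bm b^\top\bm x]$ where $A$ is the symmetric solution of $\Lambda^2A+A\Lambda^2=-\frac12(L+L^\top)$, $L=\Lambda\bm e_i\bm e_j^\top+\bm e_i\bm e_j^\top\Lambda$, and $\bm b=-A\bm\mu$. $\hat\Sigma^{-1/2}$ is the symmetric positive definite inverse square root. *)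

(* Defs.v *)
From HB Require Import structures.
From mathcomp Require Import all_boot all_order all_algebra.
From mathcomp Require Import all_classical all_reals all_analysis.
Set Implicit Arguments. Unset Strict Implicit. Unset Printing Implicit Defensive.
Import Order.TTheory GRing.Theory Num.Theory.
Local Open Scope ring_scope.

Definition spd (R : realType) (d : nat) (M : 'M[R]_d) : Prop :=
  M^T = M /\ forall v : 'cV[R]_d, v != 0 -> 0 < (v^T *m M *m v) 0 0.

Definition spd_inv_sqrt (R : realType) (d : nat) (M S : 'M[R]_d) : Prop :=
  spd S /\ S *m S *m M = 1%:M.

Definition sample_mean (R : realType) (d n : nat) (x : 'I_n -> 'cV[R]_d)
  : 'cV[R]_d := (n%:R)^-1 *: \sum_(t < n) x t.

Definition sample_cov (R : realType) (d n : nat) (x : 'I_n -> 'cV[R]_d)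
  : 'M[R]_d :=
  (n%:R)^-1 *: \sum_(t < n)
     ((x t - sample_mean x) *m (x t - sample_mean x)^T).

Definition zvec (R : realType) (dT : measure_display) (T : measurableType dT)
  (P : probability T R) (d : nat) (z : 'I_d -> {RV P >-> R}) (w : T)
  : 'cV[R]_d := \col_i (z i w).

(* E_theta[h(x)] where x = mu + Lambda^{-1} z has density
   |Lambda| f(Lambda (x - mu)), z ~ f. *)
Definition model_expect (R : realType) (dT : measure_display) (T : measurableType dT)
  (P : probability T R) (d : nat) (z : 'I_d -> {RV P >-> R})
  (mu : 'cV[R]_d) (Lam : 'M[R]_d) (h : 'cV[R]_d -> R) : R :=
  fine ('E_P[fun w => h (mu + invmx Lam *m zvec z w)%R])%E.

Definition score_mu (R : realType) (d : nat) (i : 'I_d) (mu x : 'cV[R]_d) : R :=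
  x i 0 - mu i 0.

Definition Lmat (R : realType) (d : nat) (Lam : 'M[R]_d) (i j : 'I_d) : 'M[R]_d :=
  Lam *m delta_mx i j + delta_mx i j *m Lam.

Definition lyap_sol (R : realType) (d : nat) (Lam : 'M[R]_d) (i j : 'I_d)
  (A : 'M[R]_d) : Prop :=
  A^T = A /\
  Lam *m Lam *m A + A *m Lam *m Lam
    = - (2%:R^-1 *: (Lmat Lam i j + (Lmat Lam i j)^T)).

Definition quadf (R : realType) (d : nat) (A : 'M[R]_d) (b x : 'cV[R]_d) : R :=
  2%:R^-1 * (x^T *m A *m x) 0 0 + (b^T *m x) 0 0.

Definition score_Lam (R : realType) (dT : measure_display) (T : measurableType dT)
  (P : probability T R) (d : nat) (z : 'I_d -> {RV P >-> R})
  (mu : 'cV[R]_d) (Lam A : 'M[R]_d) (x : 'cV[R]_d) : R :=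
  quadf A (- (A *m mu)) x - model_expect z mu Lam (quadf A (- (A *m mu))).

(* The Wasserstein estimating equations (1/n) sum_t S_k(x_t, theta) = 0
   for all mu_i and all Lambda_ij (A being the symmetric solution of the
   Lyapunov equation, unique for SPD Lambda). *)
Definition wasserstein_eqs (R : realType) (dT : measure_display) (T : measurableType dT)
  (P : probability T R) (d n : nat) (z : 'I_d -> {RV P >-> R})
  (x : 'I_n -> 'cV[R]_d) (mu : 'cV[R]_d) (Lam : 'M[R]_d) : Prop :=
  (forall i : 'I_d, (n%:R)^-1 * \sum_(t < n) score_mu i mu (x t) = 0) /\
  (forall (i j : 'I_d) (A : 'M[R]_d), lyap_sol Lam i j A ->
     (n%:R)^-1 * \sum_(t < n) score_Lam z mu Lam A (x t) = 0).

(* Main.v *)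
Require Import Defs.
From HB Require Import structures.
From mathcomp Require Import all_boot all_order all_algebra.
From mathcomp Require Import all_classical all_reals all_analysis.
From mathcomp Require Import complex.
From mathcomp Require Import ring lra.
Set Implicit Arguments. Unset Strict Implicit. Unset Printing Implicit Defensive.
Import Order.TTheory GRing.Theory Num.Theory.
Local Open Scope ring_scope.

Definition pdR (R : realFieldType) n (M : 'M[R]_n) :=
  forall v : 'cV[R]_n, v != 0 -> 0 < (v^T *m M *m v) 0 0.

Lemma interp_poly (F : fieldType) (s : seq F) (f : F -> F) :
  exists q : {poly F}, forall a, a \in s -> q.[a] = f a.
Proof.
elim: s => [|a s [q hq]]; first by exists 0.
have [ha|ha] := boolP (a \in s).
  exists q => b; rewrite inE => /predU1P [->|]; [exact: hq|exact: hq].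
pose pi := \prod_(b <- s) ('X - b%:P).
have pia : pi.[a] != 0 by rewrite -/(root pi a) root_prod_XsubC.
exists (q + ((f a - q.[a]) / pi.[a]) *: pi) => b; rewrite inE => /predU1P [->|hb].
  by rewrite hornerD hornerZ mulfVK // addrC subrK.
have : root pi b by rewrite root_prod_XsubC.
by move/rootP => pib; rewrite hornerD hornerZ pib mulr0 addr0 hq.
Qed.

Section Sym.
Variable R : rcfType.

Lemma tr_horner_sym n (M : 'M[R]_n.+1) (p : {poly R}) : M^T = M ->
  (horner_mx M p)^T = horner_mx M p.
Proof.
move=> Ms; elim/poly_ind: p => [|p c ih]; first by rewrite rmorph0 trmx0.
rewrite rmorphD rmorphM /= horner_mx_X horner_mx_C linearD /= tr_scalar_mx.
congr (_ + _); rewrite -[_ * _]/(_ *m _) trmx_mul ih Ms.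
by have := comm_mx_horner p (comm_mx_refl M).
Qed.

Lemma sum_sq_ge0 n (v : 'rV[R]_n) : 0 <= (v *m v^T) 0 0.
Proof.
rewrite mxE; apply: sumr_ge0 => i _; rewrite mxE -expr2; exact: sqr_ge0.
Qed.

End Sym.
Section B.
Variable R : rcfType.
Lemma poly_root_inv4 n (M : 'M[R]_n.+1) : M^T = M ->
  (forall v : 'cV[R]_n.+1, v != 0 -> 0 < (v^T *m M *m v) 0 0) ->
  exists q : {poly R}, horner_mx M ('X * q ^+ 4 - 1) = 0.
Proof.
move=> Ms Mpd.
pose f := real_complex R.
pose Mc := map_mx f M.
have Msymc : Mc \is symmetricmx.
  apply/is_hermitianmxP; rewrite expr0 scale1r map_mx_id // /Mc map_trmx Ms.
  done.
have Mreal : Mc \is a realmx.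
  by apply/mxOverP => i j; rewrite mxE; apply/complex_realP; eexists.
have Mh := realsym_hermsym Msymc Mreal.
have /orthomx_spectralP Mdec := hermitian_normalmx Mh.
have Dreal := hermitian_spectral_diag_real Mh.
have Punit : spectralmx Mc \in unitmx := spectral_unit Mc.
move: Mdec Dreal Punit.
set P := spectralmx Mc; set D := spectral_diag Mc => Mdec Dreal Punit.
pose d k := @complex.Re R (D 0 k).
have Dd k : D 0 k = f (d k).
  by rewrite /f /d RRe_real //; exact: (mxOverP Dreal).
have eigc k : eigenvalue Mc (D 0 k).
  apply/eigenvalueP; exists (row k P).
    rewrite -row_mul.
    have -> : P *m Mc = diag_mx D *m P.
      by rewrite Mdec !mulmxA mulmxV // mul1mx.
    by rewrite row_mul row_diag_mx -scalemxAl -rowE.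
  apply/eqP => hk.
  have := congr1 (mulmx^~ (invmx P)) hk.
  rewrite mul0mx -row_mul mulmxV // => /rowP /(_ k).
  by rewrite !mxE eqxx /= => /eqP; rewrite oner_eq0.
have dpos k : 0 < d k.
  have := eigc k; rewrite Dd eigenvalue_map => /eigenvalueP [v vM vn0].
  have := Mpd v^T; rewrite trmx_eq0 trmxK => /(_ vn0).
  rewrite vM -scalemxAl mxE.
  have := sum_sq_ge0 v.
  move=> s0 h; rewrite ltNge; apply/negP => dk0; move: h.
  by rewrite ltNge mulr_le0_ge0.
pose rt (a : R) := (Num.sqrt (Num.sqrt a))^-1.
have [q hq] := interp_poly [seq d k | k <- enum 'I_n.+1] rt.
exists q.
have hqd k : d k * q.[d k] ^+ 4 = 1.
  rewrite hq; last by rewrite map_f // mem_enum.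
  rewrite /rt exprVn -[4%N]/(2 * 2)%N exprM sqr_sqrtr ?sqrtr_ge0 //.
  by rewrite sqr_sqrtr ?ltW // mulfV // gt_eqF.
apply: (@map_mx_inj _ _ f).

rewrite map_mx0 map_horner_mx -/Mc Mdec horner_mx_uconjC // horner_mx_diag.
have -> : map_mx (horner (map_poly f ('X * q ^+ 4 - 1))) D = 0.
  apply/rowP => k; rewrite !mxE Dd horner_map /= hornerD hornerN hornerM hornerX horner_exp hornerC hqd subrr.
  exact: rmorph0.
by rewrite linear0 mulmx0 mul0mx.
Qed.

Lemma sum_sq_gt0 n (w : 'cV[R]_n) : w != 0 -> 0 < (w^T *m w) 0 0.
Proof.
move=> wn0; rewrite lt_def; apply/andP; split; last first.
  rewrite mxE; apply: sumr_ge0 => i _; rewrite mxE -expr2; exact: sqr_ge0.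
apply: contra wn0; rewrite mxE => /eqP /psumr_eq0P h.
apply/eqP/matrixP => i j; rewrite ord1 mxE.
have h0 : forall k : 'I_n, true -> 0 <= w^T 0 k * w k 0.
  by move=> k _; rewrite mxE -expr2 sqr_ge0.
by have := h h0 i isT; rewrite mxE -expr2 => /eqP; rewrite sqrf_eq0 => /eqP.
Qed.


Lemma inv_sqrt_exists n (M : 'M[R]_n) : M^T = M -> pdR M ->
  exists S : 'M[R]_n, (S^T = S /\ pdR S) /\ S *m S *m M = 1%:M.
Proof.
case: n M => [|n] M Ms Mpd.
  exists 0; split; last by apply/matrixP => [[]].
  split; first by rewrite trmx0.
  by move=> v; rewrite (_ : v = 0) ?eqxx // ; apply/matrixP => [[]].
have [q hq] := poly_root_inv4 Ms Mpd.
pose Q := horner_mx M q.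
have QM : Q *m M = M *m Q by have := comm_horner_mx q (comm_mx_refl M).
have hM : M *m Q *m Q *m Q *m Q = 1%:M.
  move: hq; rewrite rmorphB rmorphM rmorphXn /= horner_mx_X rmorph1.
  move/eqP; rewrite subr_eq0 => /eqP h.
  by rewrite -[RHS]/(1 : 'M[R]_(n.+1)) -h !exprS expr0 mulr1 !mulrA.
have QT : Q^T = Q by apply: tr_horner_sym.
exists (Q *m Q); split; last first.
  rewrite -hM !mulmxA; do 3!rewrite -[_ *m Q *m M]mulmxA QM !mulmxA.
  by rewrite QM.
split; first by rewrite trmx_mul QT.
move=> v vn0.
have Qv : Q *m v != 0.
  apply: contra vn0 => /eqP Qv0; apply/eqP.
  by rewrite -[v]mul1mx -hM -!mulmxA Qv0 !mulmx0.
have := sum_sq_gt0 Qv; rewrite trmx_mul QT !mulmxA //.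
Qed.
End B.

Section C.
Variable R : realFieldType.

Definition sylv n (B X : 'M[R]_n) := B *m X + X *m B.

Fact sylv_is_semilinear n (B : 'M[R]_n) : semilinear (sylv B).
Proof.
split=> [a A|A1 A2]; rewrite /sylv.
  by rewrite -scalemxAl -scalemxAr scalerDr.
by rewrite mulmxDl mulmxDr addrACA.
Qed.
HB.instance Definition _ n (B : 'M[R]_n) :=
  GRing.isSemilinear.Build R 'M[R]_n 'M[R]_n _ (sylv B) (sylv_is_semilinear B).

Lemma tr_quad_cols n (B Y : 'M[R]_n) :
  \tr (Y^T *m B *m Y) = \sum_k ((col k Y)^T *m B *m col k Y) 0 0.
Proof.
apply: eq_bigr => k _; rewrite !mxE; apply: eq_bigr => j _; rewrite !mxE.
by congr (_ * _); apply: eq_bigr => l _; rewrite !mxE.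
Qed.

Lemma pd_quad_ge0 n (B : 'M[R]_n) (w : 'cV[R]_n) : pdR B -> 0 <= (w^T *m B *m w) 0 0.
Proof.
move=> Bpd; have [->|wn0] := eqVneq w 0; last exact/ltW/Bpd.
by rewrite mulmx0 mxE.
Qed.

Lemma tr_quad_ge0 n (B Y : 'M[R]_n) : pdR B -> 0 <= \tr (Y^T *m B *m Y).
Proof. by move=> Bpd; rewrite tr_quad_cols; apply: sumr_ge0 => k _; exact: pd_quad_ge0. Qed.

Lemma tr_quad_eq0 n (B Y : 'M[R]_n) : pdR B -> \tr (Y^T *m B *m Y) = 0 -> Y = 0.
Proof.
move=> Bpd; rewrite tr_quad_cols => h0.
have h : forall k, ((col k Y)^T *m B *m col k Y) 0 0 = 0.
  move=> k; apply: (psumr_eq0P _ h0) => // j _; exact: pd_quad_ge0.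
apply/matrixP => j k; rewrite mxE.
have : col k Y = 0.
  apply/eqP; apply: contraT => nz; have := Bpd _ nz; by rewrite h ltxx.
by move/matrixP/(_ j 0); rewrite !mxE.
Qed.

Lemma sylv_inj n (B X : 'M[R]_n) : pdR B -> sylv B X = 0 -> X = 0.
Proof.
move=> Bpd /eqP; rewrite /sylv addr_eq0 => /eqP BX.
have e : \tr (X^T *m B *m X) = - \tr (X^T^T *m B *m X^T).
  rewrite -mulmxA BX mulmxN linearN /= trmxK mulmxA mxtrace_mulC mulmxA.
  by rewrite [in LHS]mxtrace_mulC mulmxA.
have h1 := tr_quad_ge0 X Bpd.
have h2 := tr_quad_ge0 X^T Bpd.
apply: (@tr_quad_eq0 n B X Bpd); apply/eqP; rewrite eq_le h1 andbT.
by rewrite e oppr_le0.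
Qed.

Lemma sylv_surj n (B G : 'M[R]_n) : pdR B -> exists X, sylv B X = G.
Proof.
move=> Bpd; pose L := lin_mx (sylv B).
have Lu : L \in unitmx.
  rewrite -row_free_unit -kermx_eq0; apply/eqP/row_matrixP => i.
  rewrite row0; set u := row i _.
  have uL : u *m L = 0 by rewrite /u -row_mul mulmx_ker row0.
  move: uL; rewrite -[u]vec_mxK mul_vec_lin => /eqP; rewrite mxvec_eq0 => /eqP.
  by move/(sylv_inj Bpd) ->; rewrite linear0.
exists (vec_mx (mxvec G *m invmx L)); apply: (can_inj mxvecK).
by rewrite -mul_vec_lin vec_mxK mulmxKV.
Qed.

End C.

Section E.
Variables (R : realType) (dT : measure_display) (T : measurableType dT) (P : probability T R).

Lemma E_lincomb (I : Type) (s : seq I) (c : I -> R) (F : I -> T -> R) (v : I -> R) :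
  (forall i, P.-integrable setT (EFin \o F i)) -> (forall i, ('E_P[F i] = (v i)%:E)%E) ->
  P.-integrable setT (EFin \o (fun w => \sum_(i <- s) c i * F i w)) /\
  ('E_P[fun w => (\sum_(i <- s) c i * F i w)%R] = ((\sum_(i <- s) c i * v i)%R)%:E)%E.
Proof.
move=> Fi FE; elim: s => [|a s [ih1 ih2]].
  have e : (fun w : T => \sum_(i <- [::]) c i * F i w) = cst 0.
    by apply: funext => w; rewrite big_nil.
  rewrite e big_nil expectation_cst; split => //.
  exact: finite_measure_integrable_cst.
have e : (fun w : T => \sum_(i <- a :: s) c i * F i w) =
    (fun w => c a * F a w) \+ (fun w => \sum_(i <- s) c i * F i w).
  by apply: funext => w; rewrite big_cons.
have ia : P.-integrable setT (EFin \o (fun w => c a * F a w)).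
  apply: (eq_integrable measurableT _ _ _ (integrableZl measurableT (c a) (Fi a))) => w _.
  by rewrite /= EFinM.
rewrite e big_cons; split.
  apply: (eq_integrable measurableT _ _ _ (integrableD measurableT ia ih1)) => w _.
  by rewrite /= EFinD.
rewrite expectationD ?ih2; try exact/Lfun1_integrable.
have -> : (fun w => c a * F a w) = c a \o* F a.
  by apply: funext => w; rewrite /= mulrC.
rewrite expectationZl ?FE //; last exact/Lfun1_integrable.
Qed.
End E.

Section M.
Variable R : realType.

Lemma entD m n (X Y : 'M[R]_(m, n)) i j : (X + Y) i j = X i j + Y i j.
Proof. by rewrite mxE. Qed.
Lemma entN m n (X : 'M[R]_(m, n)) i j : (- X) i j = - X i j.
Proof. by rewrite mxE. Qed.

Lemma quad_expand n (Q : 'M[R]_n) (v : 'cV[R]_n) :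
  (v^T *m Q *m v) 0 0 = \sum_k \sum_l Q k l * (v k 0 * v l 0).
Proof.
rewrite mxE; under eq_bigr => l _ do rewrite mxE big_distrl /=.
rewrite exchange_big /=; apply: eq_bigr => k _; apply: eq_bigr => l _.
by rewrite !mxE -mulrA mulrCA.
Qed.

Lemma quadf_shift n (A : 'M[R]_n) (mu y : 'cV[R]_n) : A^T = A ->
  quadf A (- (A *m mu)) (mu + y) =
  2^-1 * (y^T *m A *m y) 0 0 - 2^-1 * (mu^T *m A *m mu) 0 0.
Proof.
move=> AT.
have e1 : (mu + y)^T *m A *m (mu + y) = mu^T *m A *m mu + mu^T *m A *m y
   + (y^T *m A *m mu + y^T *m A *m y).
  by rewrite [(mu + y)^T]linearD /= !mulmxDl !mulmxDr.
have e2 : (y^T *m A *m mu) 0 0 = (mu^T *m A *m y) 0 0.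
  transitivity ((y^T *m A *m mu)^T 0 0); first by rewrite [RHS]mxE.
  by rewrite !trmx_mul trmxK AT mulmxA.
have e3 : (- (A *m mu))^T *m (mu + y) = - (mu^T *m A *m mu + mu^T *m A *m y).
  by rewrite [(- _)^T]linearN /= trmx_mul AT mulNmx mulmxDr.
rewrite /quadf e1 e3 !entD entN !entD e2.
by field.
Qed.

End M.

Section Model.
Variables (R : realType) (dT : measure_display) (T : measurableType dT) (P : probability T R).
Variables (d : nat) (z : 'I_d -> {RV P >-> R}).
Hypothesis z_int2 : forall i j, P.-integrable setT (EFin \o ((z i : T -> R) \* z j)).
Hypothesis z_cov : forall i j, ('E_P[(z i : T -> R) \* z j] = ((i == j)%:R)%:E)%E.

Lemma model_quad (Q : 'M[R]_d) (cc : R) :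
  ('E_P[fun w => (2^-1 * ((zvec z w)^T *m Q *m zvec z w) 0 0 - cc)%R]
   = ((2^-1 * \tr Q - cc)%R)%:E)%E.
Proof.
pose F (k : 'I_d) w := \sum_l (2^-1 * Q k l) * (((z k : T -> R) \* z l) w).
have hF k : P.-integrable setT (EFin \o F k) /\
    ('E_P[F k] = ((\sum_l (2^-1 * Q k l) * (k == l)%:R)%R)%:E)%E.
  exact: (E_lincomb (index_enum 'I_d) (fun l => 2^-1 * Q k l) (fun l => z_int2 k l) (fun l => z_cov k l)).
have := E_lincomb (index_enum 'I_d) (fun k => 1) (fun k => (hF k).1) (fun k => (hF k).2).
move=> [i1 e1].
have ef : (fun w => 2^-1 * ((zvec z w)^T *m Q *m zvec z w) 0 0 - cc) =
    (fun w => \sum_(k <- index_enum 'I_d) 1 * F k w) \- cst cc.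
  apply: funext => w; rewrite /= quad_expand mulr_sumr; congr (_ - _).
  apply: eq_bigr => k _; rewrite mul1r /F mulr_sumr; apply: eq_bigr => l _.
  by rewrite /zvec !mxE /= -[RHS]mulrA.
rewrite ef expectationB; first last.
- exact/Lfun1_integrable/finite_measure_integrable_cst.
- exact/Lfun1_integrable.
rewrite e1 expectation_cst -EFinB; congr (EFin (_ - _)).
rewrite /mxtrace mulr_sumr; apply: eq_bigr => k _; rewrite mul1r.
rewrite (bigD1 k) //= eqxx mulr1 big1 ?addr0 // => l /negPf.
by rewrite eq_sym => ->; rewrite mulr0.
Qed.

Lemma model_expect_val (mu : 'cV[R]_d) (Lam A : 'M[R]_d) : A^T = A ->
  model_expect z mu Lam (quadf A (- (A *m mu))) =
  2^-1 * \tr ((invmx Lam)^T *m A *m invmx Lam) - 2^-1 * (mu^T *m A *m mu) 0 0.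
Proof.
move=> AT; rewrite /model_expect.
have -> : (fun w => quadf A (- (A *m mu)) (mu + invmx Lam *m zvec z w)) =
   (fun w => 2^-1 * ((zvec z w)^T *m ((invmx Lam)^T *m A *m invmx Lam) *m zvec z w) 0 0
             - 2^-1 * (mu^T *m A *m mu) 0 0).
  apply: funext => w; rewrite quadf_shift // trmx_mul !mulmxA //.
by rewrite model_quad.
Qed.
End Model.

Section G.
Variable R : realType.

Lemma quad_tr d (A : 'M[R]_d) (y : 'cV[R]_d) : (y^T *m A *m y) 0 0 = \tr (A *m (y *m y^T)).
Proof. by rewrite mulmxA mxtrace_mulC mulmxA /mxtrace big_ord1. Qed.

Lemma sample_sum_quad d n (x : 'I_n -> 'cV[R]_d) (A : 'M[R]_d) : (0 < n)%N ->
  \sum_(t < n) ((x t - sample_mean x)^T *m A *m (x t - sample_mean x)) 0 0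
  = n%:R * \tr (A *m sample_cov x).
Proof.
move=> hn; under eq_bigr do rewrite quad_tr.
rewrite -raddf_sum /= -mulmx_sumr /sample_cov -scalemxAr mxtraceZ mulrA mulfV ?mul1r //.
by rewrite pnatr_eq0 -lt0n.
Qed.

Lemma mu_key d n (x : 'I_n -> 'cV[R]_d) (mu : 'cV[R]_d) i : (0 < n)%N ->
  (n%:R)^-1 * \sum_(t < n) score_mu i mu (x t) = (sample_mean x) i 0 - mu i 0.
Proof.
move=> hn; rewrite /score_mu /sample_mean sumrB mxE summxE sumr_const card_ord.
rewrite mulrBr -(mulr_natr (mu i 0)) mulrCA mulVf ?mulr1 //.
by rewrite pnatr_eq0 -lt0n.
Qed.

Lemma pd_unit d (M : 'M[R]_d) : pdR M -> M \in unitmx.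
Proof.
move=> Mpd; rewrite -row_free_unit -kermx_eq0; apply/eqP/row_matrixP => i.
rewrite row0; set u := row i _.
have uL : u *m M = 0 by rewrite /u -row_mul mulmx_ker row0.
apply/eqP; apply: contraT => un0.
have := Mpd u^T; rewrite trmx_eq0 => /(_ un0).
by rewrite trmxK uL mul0mx mxE ltxx.
Qed.

Lemma tr_delta d (i j : 'I_d) (Y : 'M[R]_d) : \tr (delta_mx i j *m Y) = Y j i.
Proof.
rewrite /mxtrace (bigD1 i) //= big1 ?addr0.
  rewrite mxE (bigD1 j) //= big1 ?addr0; first by rewrite mxE !eqxx mul1r.
  by move=> l nlj; rewrite mxE eqxx (negbTE nlj) mul0r.
move=> k nki; rewrite mxE big1 // => l _.
by rewrite mxE (negbTE nki) mul0r.
Qed.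

Lemma trL d (Lam Y : 'M[R]_d) i j :
  \tr (Lmat Lam i j *m Y) = (sylv Lam Y) j i.
Proof.
rewrite /Lmat mulmxDl mxtraceD -mulmxA mxtrace_mulC -!mulmxA !tr_delta /sylv entD.
by rewrite addrC.
Qed.

Lemma trG d (Lam E : 'M[R]_d) i j :
  \tr ((Lmat Lam i j + (Lmat Lam i j)^T) *m E) = (sylv Lam E) j i + (sylv Lam E^T) j i.
Proof.
rewrite mulmxDl mxtraceD trL; congr (_ + _).
by rewrite -mxtrace_tr trmx_mul trmxK mxtrace_mulC trL.
Qed.

End G.

Lemma score_sum (R : realType) (dT : measure_display) (T : measurableType dT)
  (P : probability T R) (d n : nat) (z : 'I_d -> {RV P >-> R})
  (z_int2 : forall i j, P.-integrable setT (EFin \o ((z i : T -> R) \* z j)))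
  (z_cov : forall i j, ('E_P[(z i : T -> R) \* z j] = ((i == j)%:R)%:E)%E)
  (x : 'I_n -> 'cV[R]_d) (mu : 'cV[R]_d) (Lam A : 'M[R]_d) :
  (0 < n)%N -> A^T = A -> mu = sample_mean x ->
  (n%:R)^-1 * \sum_(t < n) score_Lam z mu Lam A (x t) =
  2^-1 * (\tr (A *m sample_cov x) - \tr ((invmx Lam)^T *m A *m invmx Lam)).
Proof.
move=> hn AT hmu; rewrite /score_Lam (model_expect_val z_int2 z_cov) //.
have ht t : quadf A (- (A *m mu)) (x t) =
    2^-1 * ((x t - mu)^T *m A *m (x t - mu)) 0 0 - 2^-1 * (mu^T *m A *m mu) 0 0.
  by rewrite -{1}(subrK mu (x t)) addrC quadf_shift.
under eq_bigr do rewrite ht.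
rewrite !sumrB !sumr_const card_ord -mulr_sumr {1 2}hmu sample_sum_quad //.
have n0 : n%:R != 0 :> R by rewrite pnatr_eq0 -lt0n.
by field.
Qed.

Lemma sylvD (R : realType) d (B X Y : 'M[R]_d) : sylv B (X + Y) = sylv B X + sylv B Y.
Proof. by rewrite /sylv mulmxDl mulmxDr addrACA. Qed.
Lemma sylvZ (R : realType) d (B X : 'M[R]_d) a : sylv B (a *: X) = a *: sylv B X.
Proof. by rewrite /sylv -scalemxAl -scalemxAr scalerDr. Qed.
Lemma sylv0 (R : realType) d (B : 'M[R]_d) : sylv B 0 = 0.
Proof. by rewrite /sylv mulmx0 mul0mx addr0. Qed.

Theorem mainTheorem3 (R : realType) (dT : measure_display) (T : measurableType dT)
  (P : probability T R) (d n : nat)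
  (z : 'I_d -> {RV P >-> R})
  (z_int1 : forall i, P.-integrable setT (EFin \o (z i : T -> R)))
  (z_int2 : forall i j, P.-integrable setT (EFin \o ((z i : T -> R) \* z j)))
  (z_mean : forall i, ('E_P[z i] = 0)%E)
  (z_cov : forall i j, ('E_P[(z i : T -> R) \* z j] = ((i == j)%:R)%:E)%E)
  (x : 'I_n -> 'cV[R]_d)
  (hnd : (d <= n)%N)
  (hSigma : spd (sample_cov x)) :
  (exists S : 'M[R]_d, spd_inv_sqrt (sample_cov x) S) /\
  forall (mu : 'cV[R]_d) (Lam : 'M[R]_d), spd Lam ->
    (wasserstein_eqs z x mu Lam <->
     (mu = sample_mean x /\ spd_inv_sqrt (sample_cov x) Lam)).
Proof.
have [Sym Spd] := hSigma.
split.
  have [S [[ST Spd'] SS]] := inv_sqrt_exists Sym Spd.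
  by exists S; split; [split|].
move=> mu Lam [LT Lpd].
have [n0|hn] := posnP n.
  have d0 : d = 0%N by move: hnd; rewrite n0 leqn0 => /eqP.
  subst d; split => _.
    split; first by apply/matrixP => [[]].
    split; first by split.
    by apply/matrixP => [[]].
  by split => [[]|[]].
have Lu : Lam \in unitmx := pd_unit Lpd.
set K := invmx Lam.
have KT : K^T = K by rewrite /K trmx_inv LT.
have hK A : \tr (K^T *m A *m K) = \tr (A *m (K *m K)).
  by rewrite KT -mulmxA mxtrace_mulC -mulmxA.
have mu_iff : (forall i, (n%:R)^-1 * \sum_(t < n) score_mu i mu (x t) = 0) <->
    mu = sample_mean x.
  split => [h|-> i]; last by rewrite mu_key // subrr.
  apply/matrixP => i j; rewrite ord1.
  by have := h i; rewrite mu_key // => /eqP; rewrite subr_eq0 => /eqP ->.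
pose B := Lam *m Lam.
have BT : B^T = B by rewrite trmx_mul LT.
have sylvT Y : sylv B Y^T = (sylv B Y)^T.
  by rewrite /sylv /B linearD /= !trmx_mul LT addrC.
split.
- move=> [H1 H2]; have hmu : mu = sample_mean x := mu_iff.1 H1.
  have key i j A : lyap_sol Lam i j A -> \tr (A *m sample_cov x) = \tr (A *m (K *m K)).
    move=> hA; have := H2 i j A hA; rewrite (score_sum z_int2 z_cov) //; last exact: hA.1.
    move/eqP; rewrite mulf_eq0 invr_eq0 pnatr_eq0 /= subr_eq0 => /eqP ->.
    exact: hK.
  have Bpd : pdR B.
    move=> v vn0.
    have -> : v^T *m B *m v = (Lam *m v)^T *m (Lam *m v) by rewrite trmx_mul LT !mulmxA.
    apply: sum_sq_gt0; apply: contra vn0 => /eqP h.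
    by rewrite -[v]mul1mx -(mulVmx Lu) -mulmxA h mulmx0.
  pose D := sample_cov x - K *m K.
  have [E hE] := sylv_surj D Bpd.
  have hG i j : (sylv Lam E) j i + (sylv Lam E^T) j i = 0.
    pose G := - (2^-1 *: (Lmat Lam i j + (Lmat Lam i j)^T)).
    have GT : G^T = G.
      by rewrite /G linearN linearZ linearD /= trmxK addrC.
    have [X hX] := sylv_surj G Bpd.
    pose A := 2^-1 *: (X + X^T).
    have AT : A^T = A.
      by rewrite /A [(_ *: _)^T]linearZ /= [(_ + _)^T]linearD /= trmxK addrC.
    have hA : sylv B A = G.
      have h2 : 2^-1 + 2^-1 = 1 :> R by field.
      by rewrite /A sylvZ sylvD sylvT hX GT scalerDr -scalerDl h2 scale1r.
    have lyA : lyap_sol Lam i j A.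
      split => //; rewrite -[RHS]/G -hA /sylv /B mulmxA //.
    have t2 : \tr (A *m D) = 0.
      by rewrite /D mulmxBr linearB /= (key i j A lyA) subrr.
    have t3 : \tr (A *m D) = \tr (G *m E).
      rewrite -hE -hA /sylv mulmxDr mulmxDl !mxtraceD !mulmxA addrC; congr (_ + _).
      by rewrite -(mulmxA (A *m E) Lam Lam) mxtrace_mulC /B !mulmxA.
    move: t2; rewrite t3 /G mulNmx -scalemxAl linearN linearZ /= trG.
    by move/eqP; rewrite oppr_eq0 mulf_eq0 invr_eq0 pnatr_eq0 /= => /eqP.
  have EE : E + E^T = 0.
    apply: (sylv_inj Lpd); apply/matrixP => a b.
    by rewrite sylvD entD hG [RHS]mxE.
  have DT : D^T = D by rewrite /D linearB /= Sym trmx_mul KT.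
  have D0 : D = 0.
    have : D + D^T = sylv B (E + E^T) by rewrite -hE sylvD sylvT.
    rewrite EE sylv0 DT => /eqP; rewrite -mulr2n -scaler_nat scaler_eq0 pnatr_eq0 /=.
    by move/eqP.
  split => //; split => //.
  move/eqP: D0; rewrite /D subr_eq0 => /eqP ->.
  by rewrite mulmxA -(mulmxA Lam Lam K) mulmxV // mulmx1 mulmxV.
- move=> [hmu [_ hL]]; split; first exact: mu_iff.2.
  have KKL : K *m K *m (Lam *m Lam) = 1%:M.
    by rewrite mulmxA -(mulmxA K K Lam) mulVmx // mulmx1 mulVmx.
  have SgKK : sample_cov x = K *m K.
    by rewrite -[LHS]mul1mx -KKL -(mulmxA (K *m K)) hL mulmx1.
  move=> i j A [AT _]; rewrite (score_sum z_int2 z_cov) // SgKK -hK subrr mulr0 //.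
Qed.
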